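(* Let $1\le r^{\star}\le r<n$, let $u_{0},u_{1},\dots,u_{n-1}$ be an orthonormal basis of $\mathbb{R}^{n}$, let $q=r-r^{\star}+1$ and $\kappa=1+2\sqrt{q}$. Let $\mathbf{H}$ be a real symmetric $n^{2}\times n^{2}$ matrix with $I\preceq\mathbf{H}\preceq\kappa I$ satisfying $$\mathbf{H}\,\mathrm{vec}\Big(\sqrt{q}u_{0}u_{0}^{T}+\sum_{i=1}^{q}u_{i}u_{i}^{T}\Big)=\kappa\,\mathrm{vec}\Big(\sqrt{q}u_{0}u_{0}^{T}+\sum_{i=1}^{q}u_{i}u_{i}^{T}\Big),$$ $$\mathbf{H}\,\mathrm{vec}\Big(\sqrt{q}u_{0}u_{0}^{T}-\sum_{i=1}^{q}u_{i}u_{i}^{T}\Big)=\mathrm{vec}\Big(\sqrt{q}u_{0}u_{0}^{T}-\sum_{i=1}^{q}u_{i}u_{i}^{T}\Big),$$ $$\mathbf{H}\,\mathrm{vec}(u_{0}u_{i}^{T}+u_{i}u_{0}^{T})=\kappa\,\mathrm{vec}(u_{0}u_{i}^{T}+u_{i}u_{0}^{T})\quad\text{for all }i\in\{1,\dots,r\}.$$ Let $\xi=\sqrt{1+\sqrt{q}}$, $\delta=1/(1+1/\sqrt{q})$, $Z=\xi\,[u_{0},u_{q+1},u_{q+2},\dots,u_{r}]\in\mathbb{R}^{n\times r^{\star}}$ and $X=[u_{1},\dots,u_{q},\xi u_{q+1},\dots,\xi u_{r}]\in\mathbb{R}^{n\times r}$. Then $(\delta,(1-\delta)\mathbf{H})$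 is a feasible point of the problem defining $\delta_{\mathrm{ub}}(X,Z)$; that is, $\mathbf{H}'=(1-\delta)\mathbf{H}$ satisfies $\mathbf{J}^{T}\mathbf{H}'\mathbf{e}=0$, $2I_{r}\otimes\mathrm{mat}(\mathbf{H}'\mathbf{e})+\mathbf{J}^{T}\mathbf{H}'\mathbf{J}\succeq0$, and $(1-\delta)I\preceq\mathbf{H}'\preceq(1+\delta)I$.
   Context: $\mathrm{vec}$ is column-stacking vectorization and $\mathrm{mat}$ its inverse; $\otimes$ is the Kronecker product with $\mathrm{vec}(AXB^{T})=(B\otimes A)\mathrm{vec}(X)$. For $X\in\mathbb{R}^{n\times r}$, $Z\in\mathbb{R}^{n\times r^{\star}}$: $\mathbf{e}=\mathrm{vec}(XX^{T}-ZZ^{T})$ and $\mathbf{J}\in\mathbb{R}^{n^{2}\times nr}$ satisfies $\mathbf{J}\,\mathrm{vec}(Y)=\mathrm{vec}(XY^{T}+YX^{T})$ for all $Y\in\mathbb{R}^{n\times r}$. $\delta_{\mathrm{ub}}(X,Z)$ is the minimum of $\delta$ over pairs $(\delta,\mathbf{H}')$ with $\mathbf{H}'$ real symmetric $n^{2}\times n^{2}$ satisfying $\mathbf{J}^{T}\mathbf{H}'\mathbf{e}=0$, $2I_{r}\otimes\mathrm{mat}(\mathbf{H}'\mathbf{e})+\mathbf{J}^{T}\mathbf{H}'\mathbf{J}\succeq0$, and $(1-\delta)I\preceq\mathbf{H}'\preceq(1+\delta)I$. *)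

(* Defs.v *)
From HB Require Import structures.
From mathcomp Require Import all_boot all_order all_algebra.
Set Implicit Arguments. Unset Strict Implicit. Unset Printing Implicit Defensive.
Import Order.TTheory GRing.Theory Num.Theory.
Local Open Scope ring_scope.

Section Defs.
Variable R : rcfType.

(* splitting an index of 'I_(m * n) into the pair (i, j) with value i*n + j,
   using the same enumeration as mathcomp's mxvec *)
Definition pidx (m n : nat) (k : 'I_(m * n)) : 'I_m * 'I_n :=
  enum_val (cast_ord (esym (mxvec_cast m n)) k).

(* column-stacking vectorization: vec A at index j*m + i is A i j *)
Definition vec (m n : nat) (A : 'M[R]_(m, n)) : 'cV[R]_(n * m) := (mxvec A^T)^T.

Definition mat (m n : nat) (v : 'cV[R]_(n * m)) : 'M[R]_(m, n) := (vec_mx v^T)^T.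

(* Kronecker product B (x) A, so that vec (A X B^T) = kron B A *m vec X *)
Definition kron (p q m n : nat) (B : 'M[R]_(p, q)) (A : 'M[R]_(m, n))
  : 'M[R]_(p * m, q * n) :=
  \matrix_(k, l) (B (pidx k).1 (pidx l).1 * A (pidx k).2 (pidx l).2).

(* positive semidefinite (symmetric) matrix; A >= B in the Loewner order is
   psd (A - B) *)
Definition psd (N : nat) (A : 'M[R]_N) : Prop :=
  A^T = A /\ forall x : 'cV[R]_N, 0 <= (x^T *m A *m x) 0 0.

End Defs.

(* Main.v *)
Require Import Defs.
From HB Require Import structures.
From mathcomp Require Import all_boot all_order all_algebra.
From mathcomp Require Import ring lra zify.
Import Order.TTheory GRing.Theory Num.Theory.
Local Open Scope ring_scope.

Set Implicit Arguments. Unset Strict Implicit.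

Section Gen.
Variable R : rcfType.

Lemma pidxE m n (i : 'I_m) (j : 'I_n) : pidx (mxvec_index i j) = (i, j).
Proof. by rewrite /pidx /mxvec_index cast_ordK enum_rankK. Qed.

Lemma vecE m n (A : 'M[R]_(m, n)) i j : vec A (mxvec_index j i) 0 = A i j.
Proof. by rewrite /vec !mxE mxvecE mxE. Qed.

Lemma sum_mxvec m n (F : 'I_(m * n) -> R) :
  \sum_k F k = \sum_i \sum_j F (mxvec_index i j).
Proof.
rewrite (reindex _ (curry_mxvec_bij _ _)) /= pair_bigA /=.
by apply: eq_bigr => -[i j].
Qed.

Lemma vecD m n (A B : 'M[R]_(m, n)) : vec (A + B) = vec A + vec B.
Proof. by rewrite /vec !linearD. Qed.
Lemma vecZ m n a (A : 'M[R]_(m, n)) : vec (a *: A) = a *: vec A.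
Proof. by rewrite /vec !linearZ. Qed.
Lemma vecN m n (A : 'M[R]_(m, n)) : vec (- A) = - vec A.
Proof. by rewrite /vec !linearN. Qed.
Lemma vecB m n (A B : 'M[R]_(m, n)) : vec (A - B) = vec A - vec B.
Proof. by rewrite vecD vecN. Qed.
Lemma vec_sum m n I (s : seq I) (F : I -> 'M[R]_(m, n)) :
  vec (\sum_(i <- s) F i) = \sum_(i <- s) vec (F i).
Proof. by rewrite /vec !linear_sum. Qed.

Lemma matK m n (A : 'M[R]_(m, n)) : mat (vec A) = A.
Proof. by rewrite /mat /vec trmxK mxvecK trmxK. Qed.
Lemma vecK m n (v : 'cV[R]_(n * m)) : vec (mat v) = v.
Proof. by rewrite /mat /vec trmxK vec_mxK trmxK. Qed.

Lemma vec_dot m n (A B : 'M[R]_(m, n)) :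
  ((vec A)^T *m vec B) 0 0 = \tr (A^T *m B).
Proof.
rewrite mxE sum_mxvec /mxtrace; apply: eq_bigr => j _.
rewrite mxE; apply: eq_bigr => i _.
by rewrite [(vec A)^T _ _]mxE !vecE mxE.
Qed.

Lemma kron_vec p q m n (B : 'M[R]_(p, q)) (A : 'M[R]_(m, n)) (X : 'M[R]_(n, q)) :
  kron B A *m vec X = vec (A *m X *m B^T).
Proof.
apply/matrixP => k i0; rewrite ord1; case/mxvec_indexP: k => j a.
rewrite vecE mxE sum_mxvec [RHS]mxE; apply: eq_bigr => j' _.
rewrite [in RHS]mxE mulr_suml; apply: eq_bigr => b _.
by rewrite [kron _ _ _ _]mxE !pidxE vecE /= mxE; ring.
Qed.

Lemma kron_tr p q m n (B : 'M[R]_(p, q)) (A : 'M[R]_(m, n)) :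
  (kron B A)^T = kron B^T A^T.
Proof. by apply/matrixP => k l; rewrite !mxE. Qed.

Lemma tr11 (A : 'M[R]_1) : \tr A = A 0 0.
Proof. by rewrite /mxtrace big_ord1. Qed.

Lemma dot_ge0 N (x : 'cV[R]_N) : 0 <= (x^T *m x) 0 0.
Proof. rewrite mxE; apply: sumr_ge0 => i _; by rewrite mxE -expr2 sqr_ge0. Qed.


Lemma entD m n (A B : 'M[R]_(m.+1, n.+1)) : (A + B) 0 0 = A 0 0 + B 0 0.
Proof. by rewrite mxE. Qed.
Lemma entN m n (A : 'M[R]_(m.+1, n.+1)) : (- A) 0 0 = - A 0 0.
Proof. by rewrite mxE. Qed.
Lemma entB m n (A B : 'M[R]_(m.+1, n.+1)) : (A - B) 0 0 = A 0 0 - B 0 0.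
Proof. by rewrite !mxE. Qed.
Lemma entZ m n a (A : 'M[R]_(m.+1, n.+1)) : (a *: A) 0 0 = a * A 0 0.
Proof. by rewrite mxE. Qed.
Lemma entT m n (A : 'M[R]_(m.+1, n.+1)) : (A^T) 0 0 = A 0 0.
Proof. by rewrite mxE. Qed.
Lemma ent_sym N (x y : 'cV[R]_N) : (x^T *m y) 0 0 = (y^T *m x) 0 0.
Proof. by rewrite -entT trmx_mul trmxK. Qed.

Lemma dot_eq0 N (x : 'cV[R]_N) : (x^T *m x) 0 0 = 0 -> x = 0.
Proof.
rewrite mxE => h; apply/matrixP => i j; rewrite ord1 mxE.
have h0 : forall k : 'I_N, true -> 0 <= x^T 0 k * x k 0.
  by move=> k _; rewrite mxE -expr2 sqr_ge0.
have := psumr_eq0P h0 h (i := i) isT.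
by rewrite mxE => /eqP; rewrite mulf_eq0 orbb => /eqP.
Qed.

Lemma psd_scale N a (A : 'M[R]_N) : 0 <= a -> psd A -> psd (a *: A).
Proof.
move=> ha [hs hq]; split; first by rewrite linearZ /= hs.
by move=> x; rewrite -scalemxAr -scalemxAl entZ mulr_ge0.
Qed.

Lemma quad_lb N (H : 'M[R]_N) (k : R) (p d : 'cV_N) :
  H^T = H -> (forall x : 'cV_N, 0 <= (x^T *m H *m x) 0 0) -> H *m p = k *: p ->
  (p^T *m d) 0 0 = 0 ->
  k * (p^T *m p) 0 0 <= ((p + d)^T *m H *m (p + d)) 0 0.
Proof.
move=> hs hq hp hd.
have hpH : p^T *m H = k *: p^T by rewrite -hs -trmx_mul hp linearZ.
have -> : (p + d)^T = p^T + d^T by rewrite linearD.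
rewrite !mulmxDl hpH -!scalemxAl !mulmxDr !entD !entZ -mulmxA hp.
rewrite -scalemxAr entZ (ent_sym d p) hd !mulr0 entD hd addr0 add0r.
by rewrite -[X in X <= _]addr0 lerD2l.
Qed.

Lemma trPP N (x y : 'cV[R]_N) : x^T *m y = 0 -> x^T *m x = 1%:M ->
  \tr ((x *m y^T + y *m x^T)^T *m (x *m y^T + y *m x^T)) = 2 * (y^T *m y) 0 0.
Proof.
move=> hxy hxx.
have hyx : y^T *m x = 0 by rewrite -[y^T *m x]trmxK trmx_mul trmxK hxy linear0.
have -> : (x *m y^T + y *m x^T)^T = x *m y^T + y *m x^T.
  by rewrite linearD /= !trmx_mul !trmxK addrC.
have t1 : \tr (x *m y^T *m (x *m y^T)) = 0.
  by rewrite mulmxA -(mulmxA x) hyx mulmx0 mul0mx mxtrace0.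
have t2 : \tr (x *m y^T *m (y *m x^T)) = (y^T *m y) 0 0.
  by rewrite mxtrace_mulC !mulmxA -(mulmxA y) hxx mulmx1 mxtrace_mulC tr11.
have t3 : \tr (y *m x^T *m (x *m y^T)) = (y^T *m y) 0 0.
  by rewrite mulmxA -(mulmxA y) hxx mulmx1 mxtrace_mulC tr11.
have t4 : \tr (y *m x^T *m (y *m x^T)) = 0.
  by rewrite mulmxA -(mulmxA y) hxy mulmx0 mul0mx mxtrace0.
rewrite !mulmxDl !mulmxDr !mxtraceD t1 t2 t3 t4; ring.
Qed.

Lemma trPM N k (x : 'cV[R]_N) (A B : 'M[R]_(N, k)) (b : 'cV[R]_k) (w : 'cV[R]_N) :
  x^T *m A = 0 -> b = B^T *m x -> w = A *m b ->
  \tr ((x *m w^T + w *m x^T)^T *m (A *m B^T + B *m A^T)) = 2 * (w^T *m w) 0 0.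
Proof.
move=> hxA hb hw.
have hAx : A^T *m x = 0 by rewrite -[x in LHS]trmxK -trmx_mul hxA linear0.
have hb' : x^T *m B = b^T by rewrite hb trmx_mul trmxK.
have -> : (x *m w^T + w *m x^T)^T = x *m w^T + w *m x^T.
  by rewrite linearD /= !trmx_mul !trmxK addrC.
have t1 : \tr (x *m w^T *m (A *m B^T)) = (w^T *m w) 0 0.
  by rewrite mxtrace_mulC !mulmxA -(mulmxA A) -hb -hw mxtrace_mulC tr11.
have t2 : \tr (x *m w^T *m (B *m A^T)) = 0.
  by rewrite mxtrace_mulC !mulmxA -(mulmxA B) hAx mulmx0 mul0mx mxtrace0.
have t3 : \tr (w *m x^T *m (A *m B^T)) = 0.
  by rewrite mulmxA -(mulmxA w) hxA mulmx0 mul0mx mxtrace0.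
have t4 : \tr (w *m x^T *m (B *m A^T)) = (w^T *m w) 0 0.
  by rewrite -mulmxA mxtrace_mulC !mulmxA hb' -trmx_mul -hw tr11.
rewrite !mulmxDl !mulmxDr !mxtraceD t1 t2 t3 t4; ring.
Qed.

Lemma trU N k (x : 'cV[R]_N) (A V : 'M[R]_(N, k)) :
  x^T *m A = 0 -> \tr ((x *m x^T)^T *m (A *m V^T + V *m A^T)) = 0.
Proof.
move=> hxA.
have hAx : A^T *m x = 0 by rewrite -[x in LHS]trmxK -trmx_mul hxA linear0.
rewrite trmx_mul trmxK mulmxDr mxtraceD.
rewrite mulmxA -(mulmxA x) hxA mulmx0 mul0mx mxtrace0 add0r.
by rewrite mxtrace_mulC !mulmxA -(mulmxA V) hAx mulmx0 mul0mx mxtrace0.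
Qed.

Lemma trK N k c (x : 'cV[R]_N) (Y : 'M[R]_(N, k)) :
  \tr (Y^T *m (c *: (x *m x^T)) *m Y) = c * ((Y^T *m x)^T *m (Y^T *m x)) 0 0.
Proof.
rewrite -scalemxAr -scalemxAl mxtraceZ; congr (_ * _).
by rewrite trmx_mul trmxK -tr11 [in RHS]mxtrace_mulC !mulmxA.
Qed.
End Gen.

Section Main.
Variables (R : rcfType) (n r rs : nat).
Hypotheses (hrs : (1 <= rs)%N) (hrsr : (rs <= r)%N) (hrn : (r < n)%N).
Variable u : nat -> 'cV[R]_n.
Hypothesis hu : forall i j, (i < n)%N -> (j < n)%N ->
          (u i)^T *m u j = ((i == j)%:R)%:M.

Local Notation q := (r - rs + 1)%N.
Local Notation s := (Num.sqrt (q%:R : R)).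
Local Notation xi := (Num.sqrt (1 + s)).
Local Notation xj j := (if (j < q)%N then 1 else xi).
Local Notation X := (\matrix_(a, j) (if (j < q)%N then u j.+1 a 0 else xi * u j.+1 a 0) : 'M[R]_(n, r)).

Lemma uu i j : (i < n)%N -> (j < n)%N -> \sum_a u i a 0 * u j a 0 = (i == j)%:R.
Proof.
move=> hi hj; have := congr1 (fun M : 'M[R]_1 => M 0 0) (hu hi hj).
rewrite /= [LHS]mxE [RHS]mxE mulr1n => <-; apply: eq_bigr => a _; by rewrite mxE.
Qed.

Lemma Xe a (j : 'I_r) : X a j = xj j * u j.+1 a 0.
Proof. by rewrite mxE; case: ifP; rewrite ?mul1r. Qed.

Lemma ltjn (j : 'I_r) : (j.+1 < n)%N.
Proof. have := ltn_ord j; lia. Qed.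

Lemma n0 : (0 < n)%N.
Proof. lia. Qed.

Lemma u0X : (u 0)^T *m X = 0.
Proof.
apply/matrixP => i j; rewrite ord1 [LHS]mxE [RHS]mxE.
transitivity (xj j * \sum_a u 0 a 0 * u j.+1 a 0).
  rewrite mulr_sumr; apply: eq_bigr => a _; rewrite Xe mxE; ring.
by rewrite uu ?ltjn ?n0 //= mulr0n mulr0.
Qed.

Lemma Xtu0 : X^T *m u 0 = 0.
Proof. by rewrite -[u 0 in LHS]trmxK -trmx_mul u0X linear0. Qed.

Lemma XtX : X^T *m X = diag_mx (\row_(j < r) (xj j)^+2).
Proof.
apply/matrixP => j k; rewrite [LHS]mxE [RHS]mxE [in RHS]mxE.
transitivity (xj j * xj k * \sum_a u j.+1 a 0 * u k.+1 a 0).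
  rewrite mulr_sumr; apply: eq_bigr => a _; rewrite mxE !Xe; ring.
rewrite uu ?ltjn // eqSS.
have [->|hjk] := eqVneq j k; first by rewrite eqxx mulr1n mulr1 expr2.
by rewrite val_eqE (negbTE hjk) !mulr0n mulr0.
Qed.

Lemma s_ge0 : 0 <= s. Proof. exact: sqrtr_ge0. Qed.
Lemma xi2 : xi ^+ 2 = 1 + s.
Proof. by rewrite sqr_sqrtr // addr_ge0 // s_ge0. Qed.

Lemma xj2_ge1 (j : nat) : 1 <= (xj j)^+2.
Proof. case: ifP => _; rewrite ?expr1n // xi2 lerDl; exact: s_ge0. Qed.

Lemma wb (b : 'cV[R]_r) : (b^T *m b) 0 0 <= ((X *m b)^T *m (X *m b)) 0 0.
Proof.
rewrite trmx_mul !mulmxA -(mulmxA b^T) XtX mul_mx_diag.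
rewrite [X in X <= _]mxE [X in _ <= X]mxE; apply: ler_sum => j _; rewrite !mxE.
have := xj2_ge1 j; nra.
Qed.

Lemma Xb (b : 'cV[R]_r) : X *m b = \sum_(j < r) (xj j * b j 0) *: u j.+1.
Proof.
apply/matrixP => a i; rewrite ord1 [LHS]mxE summxE; apply: eq_bigr => j _.
by rewrite Xe mxE; ring.
Qed.

Lemma sumX (f : nat -> R) : \sum_(j < r) (xj j)^+2 * f j.+1 =
  \sum_(1 <= i < q.+1) f i + xi^+2 * \sum_(q.+1 <= i < r.+1) f i.
Proof.
rewrite -(big_mkord xpredT (fun j => (xj j)^+2 * f j.+1)).
have hqr : (q <= r)%N by lia.
rewrite (big_cat_nat (leq0n q) hqr) /=.
congr (_ + _).
  rewrite big_add1 /=; apply: eq_big_nat => i /andP[_ hi].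
  by rewrite hi expr1n mul1r.
rewrite big_add1 /= mulr_sumr; apply: eq_big_nat => i /andP[hi _].
by rewrite ltnNge hi.
Qed.

Lemma sumZ (F : nat -> R) :
  \sum_(j < rs) F (if j == 0 :> nat then 0%N else (q + j)%N) =
  F 0%N + \sum_(q.+1 <= i < r.+1) F i.
Proof.
rewrite -(big_mkord xpredT (fun j => F (if j == 0 :> nat then 0%N else (q + j)%N))).
rewrite big_ltn //= big_add1 /=; congr (_ + _).
rewrite -{1}(add0n q.+1) big_addn.
have -> : (r.+1 - q.+1 = rs.-1)%N by lia.
by apply: eq_big_nat => i _ /=; congr F; lia.
Qed.

Local Notation Z := (\matrix_(a, j) (xi * u (if j == 0 :> nat then 0%N else (q + j)%N) a 0) : 'M[R]_(n, rs)).
Local Notation U0 := (u 0%N *m (u 0%N)^T).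
Local Notation S := (\sum_(1 <= i < q.+1) u i *m (u i)^T).
Local Notation kappa := (1 + 2 * s).

Lemma s_gt0 : 0 < s.
Proof. by rewrite sqrtr_gt0 ltr0n addn1. Qed.

Lemma eD m p (A B : 'M[R]_(m, p)) i j : (A + B) i j = A i j + B i j.
Proof. by rewrite mxE. Qed.
Lemma eN m p (A : 'M[R]_(m, p)) i j : (- A) i j = - A i j.
Proof. by rewrite mxE. Qed.
Lemma eZ m p c (A : 'M[R]_(m, p)) i j : (c *: A) i j = c * A i j.
Proof. by rewrite mxE. Qed.

Lemma XTe a (j : 'I_r) : X^T j a = xj j * u j.+1 a 0.
Proof. by rewrite mxE Xe. Qed.

Lemma hE : X *m X^T - Z *m Z^T =
  (- (2 * s)^-1) *: (s *: U0 + S) + (- (2 * s)^-1 * kappa) *: (s *: U0 - S).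
Proof.
apply/matrixP => a b.
have eX : (X *m X^T) a b = \sum_(j < r) (xj j)^+2 * (u j.+1 a 0 * u j.+1 b 0).
  by rewrite mxE; apply: eq_bigr => j _; rewrite XTe Xe; ring.
have eZ' : (Z *m Z^T) a b = \sum_(j < rs)
    (fun i => xi^+2 * (u i a 0 * u i b 0)) (if j == 0 :> nat then 0%N else (q + j)%N).
  by rewrite mxE; apply: eq_bigr => j _; rewrite !mxE /=; ring.
have eU : U0 a b = u 0%N a 0 * u 0%N b 0 by rewrite mxE big_ord1 mxE.
have eS : S a b = \sum_(1 <= i < q.+1) u i a 0 * u i b 0.
  by rewrite summxE; apply: eq_bigr => i _; rewrite mxE big_ord1 mxE.
rewrite eD eN eX eZ' [X in _ = X]eD !eZ (sumX (fun i => u i a 0 * u i b 0)) (sumZ (fun i => xi^+2 * (u i a 0 * u i b 0))) !eD !eZ eN eU eS -mulr_sumr xi2.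
have := s_gt0; move: (\sum_(q.+1 <= i < r.+1) _) (\sum_(1 <= i < q.+1) _) => T1 T2 hs.
field; lra.
Qed.

Lemma He (H : 'M[R]_(n * n)) :
  H *m vec (s *: U0 + S) = kappa *: vec (s *: U0 + S) ->
  H *m vec (s *: U0 - S) = vec (s *: U0 - S) ->
  H *m vec (X *m X^T - Z *m Z^T) = (- kappa) *: vec U0.
Proof.
move=> h1 h2; rewrite hE vecD !vecZ mulmxDr -!scalemxAr h1 h2.
rewrite scalerA -scalerDr -vecD.
have -> : s *: U0 + S + (s *: U0 - S) = (2 * s) *: U0.
  by rewrite addrACA subrr addr0 -scalerDl mulr2n mulrDl mul1r.
rewrite vecZ scalerA; congr (_ *: _).
have hs := s_gt0; field; by rewrite gt_eqF.
Qed.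

Lemma HP (H : 'M[R]_(n * n)) :
  (forall i, (1 <= i <= r)%N ->
     H *m vec (u 0%N *m (u i)^T + u i *m (u 0%N)^T) =
     kappa *: vec (u 0%N *m (u i)^T + u i *m (u 0%N)^T)) ->
  forall b : 'cV[R]_r,
  H *m vec (u 0%N *m (X *m b)^T + (X *m b) *m (u 0%N)^T) =
  kappa *: vec (u 0%N *m (X *m b)^T + (X *m b) *m (u 0%N)^T).
Proof.
move=> h3 b; rewrite Xb.
have -> : u 0%N *m (\sum_(j < r) (xj j * b j 0) *: u j.+1)^T +
          (\sum_(j < r) (xj j * b j 0) *: u j.+1) *m (u 0%N)^T =
          \sum_(j < r) (xj j * b j 0) *: (u 0%N *m (u j.+1)^T + u j.+1 *m (u 0%N)^T).
  rewrite linear_sum /= mulmx_sumr mulmx_suml -big_split /=.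
  by apply: eq_bigr => j _; rewrite linearZ /= -scalemxAr -scalemxAl scalerDr.
rewrite vec_sum mulmx_sumr scaler_sumr; apply: eq_bigr => j _.
rewrite vecZ -scalemxAr h3; last by rewrite /= ltn_ord.
by rewrite !scalerA mulrC.
Qed.
End Main.
Unset Implicit Arguments. Set Strict Implicit.

Theorem lemma26 (R : rcfType) (n r rs : nat)
  (hrs : (1 <= rs)%N) (hrsr : (rs <= r)%N) (hrn : (r < n)%N)
  (u : nat -> 'cV[R]_n)
  (hu : forall i j, (i < n)%N -> (j < n)%N ->
          (u i)^T *m u j = ((i == j)%:R)%:M)
  (H : 'M[R]_(n * n))
  (hHsym : H^T = H)
  (hHlo : psd (H - 1%:M))
  (hHhi : psd ((1 + 2 * Num.sqrt (r - rs + 1)%:R) *: 1%:M - H))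
  (hH1 : let q := (r - rs + 1)%N in let kappa := 1 + 2 * Num.sqrt q%:R in
         let M := Num.sqrt q%:R *: (u 0%N *m (u 0%N)^T)
                  + \sum_(1 <= i < q.+1) u i *m (u i)^T in
         H *m vec M = kappa *: vec M)
  (hH2 : let q := (r - rs + 1)%N in
         let M := Num.sqrt q%:R *: (u 0%N *m (u 0%N)^T)
                  - \sum_(1 <= i < q.+1) u i *m (u i)^T in
         H *m vec M = vec M)
  (hH3 : forall i, (1 <= i <= r)%N ->
         let kappa := 1 + 2 * Num.sqrt (r - rs + 1)%:R in
         let M := u 0%N *m (u i)^T + u i *m (u 0%N)^T in
         H *m vec M = kappa *: vec M) :
  let q := (r - rs + 1)%N in
  let xi := Num.sqrt (1 + Num.sqrt q%:R) in
  let delta := 1 / (1 + 1 / Num.sqrt q%:R) in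
  let Z : 'M[R]_(n, rs) :=
    \matrix_(a, j) (xi * u (if j == 0 :> nat then 0%N else (q + j)%N) a 0) in
  let X : 'M[R]_(n, r) :=
    \matrix_(a, j) (if (j < q)%N then u j.+1 a 0 else xi * u j.+1 a 0) in
  let e := vec (X *m X^T - Z *m Z^T) in
  let H' := (1 - delta) *: H in
  forall J : 'M[R]_(n * n, r * n),
  (forall Y : 'M[R]_(n, r), J *m vec Y = vec (X *m Y^T + Y *m X^T)) ->
  [/\ J^T *m H' *m e = 0,
      psd (2 *: kron (1%:M : 'M[R]_r) (mat (H' *m e)) + J^T *m H' *m J),
      psd (H' - (1 - delta) *: 1%:M)
    & psd ((1 + delta) *: 1%:M - H')].
Proof.
move=> q xi delta Z X e H' J hJ.
have hn0 : (0 < n)%N by lia.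
have hs : 0 < Num.sqrt (q%:R : R) := s_gt0 R r rs.
have hdelta : delta = Num.sqrt q%:R / (1 + Num.sqrt q%:R).
  by rewrite /delta; field; rewrite ?gt_eqF //; lra.
have e1 : 1 - delta = (1 + Num.sqrt q%:R)^-1.
  by rewrite hdelta; field; rewrite gt_eqF //; lra.
have hd1 : 0 <= 1 - delta by rewrite e1 invr_ge0; lra.
have hc0 : 0 <= 1 + delta.
  by rewrite hdelta; apply: addr_ge0 => //; apply: divr_ge0; lra.
have hc : (1 - delta) * (1 + 2 * Num.sqrt (r - rs + 1)%:R) = 1 + delta.
  by rewrite e1 hdelta; field; rewrite gt_eqF //; lra.
have hHe : H *m e = (- (1 + 2 * Num.sqrt (r - rs + 1)%:R)) *: vec (u 0%N *m (u 0%N)^T).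
  exact: (He hrs hrsr hrn hH1 hH2).
have hH'e : H' *m e = (- (1 + delta)) *: vec (u 0%N *m (u 0%N)^T).
  by rewrite /H' -scalemxAl hHe scalerA mulrN hc.
have hu0X : (u 0%N)^T *m X = 0 := u0X hrs hrsr hrn hu.
split.
- rewrite -mulmxA hH'e; apply: dot_eq0.
  set v := J^T *m _.
  have hv : J *m v = vec (X *m (mat v)^T + mat v *m X^T) by rewrite -hJ vecK.
  rewrite {1}/v trmx_mul trmxK -mulmxA hv -vecZ vec_dot linearZ /= -scalemxAl mxtraceZ.
  by rewrite trU ?mulr0.
- have hW : mat (H' *m e) = (- (1 + delta)) *: (u 0%N *m (u 0%N)^T).
    by rewrite hH'e -vecZ matK.
  rewrite hW.
  have hsymW : ((- (1 + delta)) *: (u 0%N *m (u 0%N)^T))^T =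
               (- (1 + delta)) *: (u 0%N *m (u 0%N)^T).
    by rewrite linearZ /= trmx_mul trmxK.
  have hH'T : H'^T = H' by rewrite /H' linearZ /= hHsym.
  split.
    rewrite linearD /= linearZ /= kron_tr trmx1 hsymW; congr (_ + _).
    by rewrite !trmx_mul trmxK hH'T mulmxA.
  move=> y; have [Y ->] : exists Y, y = vec Y by exists (mat y); rewrite vecK.
  rewrite mulmxDr mulmxDl entD -scalemxAr -scalemxAl entZ.

  rewrite -[(vec Y)^T *m kron _ _ *m _]mulmxA kron_vec trmx1 mulmx1 vec_dot mulmxA trK.
  have e2 : ((vec Y)^T *m (J^T *m H' *m J) *m vec Y) 0 0 =
     ((vec (X *m Y^T + Y *m X^T))^T *m H' *m vec (X *m Y^T + Y *m X^T)) 0 0.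
    by rewrite -hJ trmx_mul !mulmxA.
  rewrite e2 /H' -scalemxAr -scalemxAl entZ.
  set b := Y^T *m u 0%N.
  set w := X *m b.
  set m := vec (X *m Y^T + Y *m X^T).
  set p := vec (u 0%N *m w^T + w *m (u 0%N)^T).
  have hHp : H *m p = (1 + 2 * Num.sqrt (r - rs + 1)%:R) *: p := HP hH3 b.
  have hHq : forall x : 'cV_(n * n), 0 <= (x^T *m H *m x) 0 0.
    move=> x; case: hHlo => _ /(_ x); rewrite mulmxBr mulmxBl entB mulmx1 subr_ge0.
    by apply: le_trans; apply: dot_ge0.
  have hu0w : (u 0%N)^T *m w = 0 by rewrite /w mulmxA hu0X mul0mx.
  have hu00 : (u 0%N)^T *m u 0%N = 1%:M by rewrite hu // eqxx.
  have hpp : (p^T *m p) 0 0 = 2 * (w^T *m w) 0 0 by rewrite vec_dot trPP.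
  have hpm : (p^T *m m) 0 0 = 2 * (w^T *m w) 0 0 by rewrite vec_dot (@trPM _ _ _ _ _ Y b w hu0X erefl erefl).
  have hd : (p^T *m (m - p)) 0 0 = 0 by rewrite mulmxBr entB hpp hpm subrr.
  have lb := quad_lb hHsym hHq hHp hd.
  rewrite [p + _]addrC subrK hpp in lb.
  have hwb : (b^T *m b) 0 0 <= (w^T *m w) 0 0 := wb hrs hrsr hrn hu b.
  have l1 := ler_wpM2l hd1 lb; rewrite !mulrA hc in l1.
  have l2 := ler_wpM2l hc0 hwb.
  lra.
- rewrite /H' -scalerBr; exact: psd_scale.
- have -> : (1 + delta) *: 1%:M - H' =
    (1 - delta) *: ((1 + 2 * Num.sqrt (r - rs + 1)%:R) *: 1%:M - H).
    by rewrite scalerBr scalerA hc.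
  exact: psd_scale.
Qed.
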